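(* Let $L\subseteq\mathbb{R}^m$ be a lattice that gives the unique (up to isometry) densest periodic packing of spheres of some fixed radius in $\mathbb{R}^m$. Then (a) every lattice code in $\mathbb{R}^m/L$ is optimal, and (b) if there exists a lattice code of size $n$ in $\mathbb{R}^m/L$, then every optimal code of size $n$ in $\mathbb{R}^m/L$ is a lattice code up to isometry (i.e., is the image of a lattice code under an isometry of $\mathbb{R}^m/L$).
   Context: A lattice is a discrete full-rank subgroup of $\mathbb{R}^m$; $\ell(L)$ is the smallest Euclidean norm of a nonzero vector of $L$. The torus $\mathbb{R}^m/L$ carries the metric $d(x,y):=\min\{\|s-t\|_2:s\in x,t\in y\}$. For finite $C\subseteq\mathbb{R}^m/L$, $\delta(C)$ is the minimum distance between distinct points of $C$; an optimal code of size $n$ is an $n$-element subset maximizing $\delta$. $\operatorname{CO}(m):=\{cQ:c>0,Q\in\operatorname{O}(m)\}$. A lattice code in $\mathbb{R}^m/L$ is a set $(TL)/L$ where $T\in\operatorname{CO}(m)$ is such that $L\subseteq TL$. A periodic packing of spheres of radius $r$ is a set $P=\bigcup_{s\in S}(s+\Lambda)$ for a lattice $\Lambda$ and finite $S$, with all distinct points of $P$ at distance at least $2r$; its density is the proportion of space covered by balls of radius $r$ around points of $P$. The hypothesis means: the packing of balls of radius $\ell(L)/2$ centered at points of $L$ has maximum density among all periodic sphere packings in $\mathbb{R}^m$ with that radius, and every periodic packing of such spheres attaining this density is the image of $L$ under an isometry of $\mathbb{R}^m$. *)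

(* Defs.v *)
From HB Require Import structures.
From mathcomp Require Import all_boot all_order all_algebra.
From mathcomp Require Import all_classical all_reals.
Set Implicit Arguments. Unset Strict Implicit. Unset Printing Implicit Defensive.
Import Order.TTheory GRing.Theory Num.Theory.
Local Open Scope classical_set_scope.
Local Open Scope ring_scope.

Section Defs.
Variables (R : realType) (m : nat).
Notation vec := 'rV[R]_m.

Definition enorm (v : vec) : R := Num.sqrt (\sum_(i < m) v ord0 i ^+ 2).

Definition is_lattice (L : set vec) : Prop :=
  [/\ L 0, (forall x y, L x -> L y -> L (x - y)),
      (forall x, L x -> exists2 e : R, 0 < e &
          forall y, L y -> y <> x -> e <= enorm (y - x)) &
      (exists B : 'M[R]_m, (forall i, L (row i B)) /\ B \in unitmx)].

Definition minnorm (L : set vec) : R := inf [set enorm v | v in L `\ 0].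

(* the coset x + L, i.e. a point of the torus R^m/L *)
Definition coset (L : set vec) (x : vec) : set vec := [set x + l | l in L].

Definition torus_pt (L : set vec) (X : set vec) : Prop := exists x, X = coset L x.

(* d(X, Y) = min {||s - t|| : s in X, t in Y} (the min exists, so it is the inf) *)
Definition tdist (X Y : set vec) : R := inf [set enorm (s - t) | s in X & t in Y].

Definition torus_code (L : set vec) (C : set (set vec)) (n : nat) : Prop :=
  (forall X, C X -> torus_pt L X) /\
  exists f : 'I_n -> set vec, injective f /\ range f = C.

Definition min_dist (C : set (set vec)) : R :=
  inf [set r | exists X Y, [/\ C X, C Y, X <> Y & r = tdist X Y]].

Definition optimal_code (L : set vec) (C : set (set vec)) (n : nat) : Prop :=
  torus_code L C n /\ forall C', torus_code L C' n -> min_dist C' <= min_dist C.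

Definition is_CO (T : 'M[R]_m) : Prop :=
  exists c : R, exists Q : 'M[R]_m, [/\ 0 < c, Q *m Q^T = 1%:M & T = c *: Q].

(* image TL of L under T (acting on row vectors: x |-> x T) *)
Definition mx_image (T : 'M[R]_m) (L : set vec) : set vec := [set x *m T | x in L].

Definition lattice_code (L : set vec) (C : set (set vec)) : Prop :=
  exists T : 'M[R]_m, [/\ is_CO T, L `<=` mx_image T L &
     C = [set coset L t | t in mx_image T L]].

Definition torus_isometry (L : set vec) (phi : set vec -> set vec) : Prop :=
  [/\ (forall X, torus_pt L X -> torus_pt L (phi X)),
      (forall X Y, torus_pt L X -> torus_pt L Y -> tdist (phi X) (phi Y) = tdist X Y) &
      (forall Y, torus_pt L Y -> exists2 X, torus_pt L X & phi X = Y)].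

Definition isometry (f : vec -> vec) : Prop :=
  forall x y, enorm (f x - f y) = enorm (x - y).

Definition zbasis (Lam : set vec) (B : 'M[R]_m) : Prop :=
  Lam = [set \sum_(i < m) (z i)%:~R *: row i B | z in [set: 'I_m -> int]].

(* P is a periodic packing of spheres of radius r, P = U_{s in S} (s + Lam),
   with S = {s_1..s_k} pairwise inequivalent mod Lam, and d is its density
   divided by vol(B_r), i.e. d = k / covol(Lam). *)
Definition periodic_packing (r : R) (P : set vec) (d : R) : Prop :=
  exists (Lam : set vec) (B : 'M[R]_m) (k : nat) (s : 'I_k -> vec),
  [/\ is_lattice Lam /\ zbasis Lam B,
      (forall i j, i != j -> ~ Lam (s i - s j)),
      P = \bigcup_(i in [set: 'I_k]) coset Lam (s i),
      (forall x y, P x -> P y -> x <> y -> 2 * r <= enorm (x - y)) &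
      d = k%:R / `|\det B|].

Definition unique_densest (L : set vec) : Prop :=
  exists dL : R,
  [/\ periodic_packing (minnorm L / 2) L dL,
      (forall P d, periodic_packing (minnorm L / 2) P d -> d <= dL) &
      (forall P, periodic_packing (minnorm L / 2) P dL ->
         exists2 f : vec -> vec, isometry f & P = f @` L)].

End Defs.

(* Main.v *)
Require Import Defs.
From HB Require Import structures.
From mathcomp Require Import all_boot all_order all_algebra.
From mathcomp Require Import all_classical all_reals.
From mathcomp Require Import ring lra.
Import Order.TTheory GRing.Theory Num.Theory.
Local Open Scope classical_set_scope.
Local Open Scope ring_scope.
Set Implicit Arguments. Unset Strict Implicit. Unset Printing Implicit Defensive.

Section Basics.
Variables (R : realType) (m : nat).
Notation vec := 'rV[R]_m.

Definition dot (u v : vec) : R := \sum_(i < m) u ord0 i * v ord0 i.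

Lemma dotE (u v : vec) : dot u v = (u *m v^T) ord0 ord0.
Proof. by rewrite !mxE /dot; apply: eq_bigr => i _; rewrite mxE. Qed.

Lemma dot_ge0 (v : vec) : 0 <= dot v v.
Proof. by apply: sumr_ge0 => i _; rewrite -expr2 sqr_ge0. Qed.

Lemma enormE (v : vec) : enorm v = Num.sqrt (dot v v).
Proof. by rewrite /enorm /dot; congr Num.sqrt; apply: eq_bigr => i _; rewrite expr2. Qed.

Lemma enorm_ge0 (v : vec) : 0 <= enorm v.
Proof. by rewrite enormE sqrtr_ge0. Qed.

Lemma enorm_sq (v : vec) : enorm v ^+ 2 = dot v v.
Proof. by rewrite enormE sqr_sqrtr // dot_ge0. Qed.

Lemma dotC (u v : vec) : dot u v = dot v u.
Proof. by apply: eq_bigr => i _; rewrite mulrC. Qed.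

Lemma dotDl (u v w : vec) : dot (u + v) w = dot u w + dot v w.
Proof. by rewrite /dot -big_split /=; apply: eq_bigr => i _; rewrite mxE mulrDl. Qed.

Lemma dotNl (u w : vec) : dot (- u) w = - dot u w.
Proof. by rewrite /dot -sumrN; apply: eq_bigr => i _; rewrite mxE mulNr. Qed.

Lemma dotZl a (u w : vec) : dot (a *: u) w = a * dot u w.
Proof. by rewrite /dot mulr_sumr; apply: eq_bigr => i _; rewrite mxE mulrA. Qed.

Lemma dotBl (u v w : vec) : dot (u - v) w = dot u w - dot v w.
Proof. by rewrite dotDl dotNl. Qed.

Lemma dotDr (u v w : vec) : dot w (u + v) = dot w u + dot w v.
Proof. by rewrite dotC dotDl !(dotC w). Qed.
Lemma dotBr (u v w : vec) : dot w (u - v) = dot w u - dot w v.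
Proof. by rewrite dotC dotBl !(dotC w). Qed.
Lemma dotZr a (u w : vec) : dot w (a *: u) = a * dot w u.
Proof. by rewrite dotC dotZl dotC. Qed.

Lemma enorm_eq0 (v : vec) : enorm v = 0 -> v = 0.
Proof.
move=> h; have h2 : dot v v = 0 by rewrite -enorm_sq h expr0n.
apply/rowP => i; rewrite mxE.
have hF : forall j : 'I_m, predT j -> 0 <= v ord0 j * v ord0 j.
  by move=> j _; rewrite -expr2 sqr_ge0.
have := @psumr_eq0P _ _ predT (fun j => v ord0 j * v ord0 j) hF h2 i isT.
by move/eqP; rewrite mulf_eq0 orbb => /eqP.
Qed.

Lemma enorm0 : enorm (0 : vec) = 0.
Proof. by rewrite enormE /dot big1 ?sqrtr0 // => i _; rewrite mxE mul0r. Qed.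

Lemma enorm_gt0 (v : vec) : v != 0 -> 0 < enorm v.
Proof. by move=> hv; rewrite lt_def enorm_ge0 andbT; apply/eqP => /enorm_eq0 /eqP; rewrite (negbTE hv). Qed.

Lemma enormZ a (v : vec) : enorm (a *: v) = `|a| * enorm v.
Proof.
rewrite !enormE dotZl dotZr mulrA -expr2 sqrtrM ?sqr_ge0 //.
by rewrite sqrtr_sqr.
Qed.

Lemma enormN (v : vec) : enorm (- v) = enorm v.
Proof. by rewrite -scaleN1r enormZ normrN normr1 mul1r. Qed.

Lemma enormB (u v : vec) : enorm (u - v) = enorm (v - u).
Proof. by rewrite -enormN opprB. Qed.

Lemma enorm_orth (Q : 'M[R]_m) (v : vec) : Q *m Q^T = 1%:M -> enorm (v *m Q) = enorm v.
Proof.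
move=> hQ; rewrite !enormE !dotE trmx_mul mulmxA -(mulmxA v) hQ mulmx1 //.
Qed.

Lemma dot_orth (Q : 'M[R]_m) (u v : vec) : Q *m Q^T = 1%:M -> dot (u *m Q) (v *m Q) = dot u v.
Proof.
move=> hQ; rewrite !dotE trmx_mul mulmxA -(mulmxA u) hQ mulmx1 //.
Qed.

Lemma enorm_sqB (u v : vec) : enorm (u - v) ^+ 2 = dot u u - 2 * dot u v + dot v v.
Proof.
rewrite enorm_sq dotBl !dotBr (dotC v u); ring.
Qed.

End Basics.

Section Helpers.
Variable R : realType.

Lemma inf_le_elt (E : set R) x : (forall y, E y -> 0 <= y) -> E x -> inf E <= x.
Proof. by move=> h0 Ex; apply: ge_inf => //; exists 0 => y /h0. Qed.

Lemma inf_ge0 (E : set R) : (forall y, E y -> 0 <= y) -> 0 <= inf E.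
Proof.
move=> h0; have [[x Ex]|ne] := pselect (E !=set0).
  by apply: lb_le_inf; [exists x | move=> y /h0].
have -> : E = set0 by apply/seteqP; split=> y // Ey; apply: ne; exists y.
by rewrite inf0.
Qed.

Lemma le_inf_lb (E : set R) a : E !=set0 -> (forall y, E y -> a <= y) -> a <= inf E.
Proof. by move=> ne h; apply: lb_le_inf. Qed.

Lemma le_sum_term (I : finType) (F : I -> R) i : (forall j, 0 <= F j) -> F i <= \sum_j F j.
Proof.
move=> h; rewrite (bigD1 i) //= lerDl; apply: sumr_ge0 => j _; exact: h.
Qed.

Lemma geom_small (rho K l : R) : 0 <= rho -> rho < 1 -> 0 <= K -> 0 < l ->
  exists p : nat, rho ^+ p * K < l.
Proof.
move=> r0 r1 K0 l0.
have [->|rpos] := eqVneq rho 0.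
  by exists 1%N; rewrite expr1 mul0r.
have rgt0 : 0 < rho by rewrite lt_def rpos r0.
set h := rho^-1 - 1.
have hgt0 : 0 < h by rewrite /h subr_gt0 invf_gt1.
have bern : forall p : nat, 1 + p%:R * h <= (1 + h) ^+ p.
  elim=> [|p IH]; first by rewrite mul0r addr0 expr0.
  rewrite exprS.
  apply: le_trans (_ : (1 + h) * (1 + p%:R * h) <= _); last first.
    by rewrite ler_pM2l ?IH // addr_gt0.
  have p0 : 0 <= p%:R :> R by rewrite ler0n.
  rewrite -natr1 mulrDl mul1r; nra.
pose x := K / (l * h).
have x0 : 0 <= x by rewrite /x divr_ge0 // mulr_ge0 // ltW.
exists (Num.Def.archi_bound x).
set p := Num.Def.archi_bound x.
have hp : x < p%:R by apply: archi_boundP.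
have e1 : 1 + h = rho^-1 by rewrite /h addrC subrK.
have := bern p; rewrite e1 exprVn => hb.
have pos : 0 < rho ^+ p by rewrite exprn_gt0.
have hK : K < p%:R * h * l.
  have : K / (l * h) < p%:R by [].
  rewrite ltr_pdivrMr ?mulr_gt0 //; by rewrite (mulrC l) mulrA.
have p0 : 0 <= p%:R :> R by rewrite ler0n.
have : rho ^+ p * (1 + p%:R * h) <= 1.
  apply: (@le_trans _ _ (rho ^+ p * (rho ^+ p)^-1)); first by rewrite ler_pM2l.
  by rewrite mulfV ?lt0r_neq0.
move: hK hb pos; set q := rho ^+ p; set s := p%:R * h => hK hb pos hq.
have h1 : q * K < q * (s * l) by rewrite ltr_pM2l.
have h2 : q * s <= 1 by move: hq; rewrite mulrDr mulr1; lra.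
apply: lt_le_trans h1 _; rewrite mulrA -[X in _ <= X]mul1r ler_pM2r //.
Qed.

End Helpers.

Section Lat.
Variables (R : realType) (m : nat).
Notation vec := 'rV[R]_m.
Variable L : set vec.
Hypothesis hL : is_lattice L.

Lemma L0 : L 0. Proof. by case: hL. Qed.
Lemma LB x y : L x -> L y -> L (x - y). Proof. by case: hL => _ h _ _; apply: h. Qed.
Lemma LN x : L x -> L (- x). Proof. by move=> h; rewrite -sub0r; apply: LB => //; exact: L0. Qed.
Lemma LD x y : L x -> L y -> L (x + y).
Proof. by move=> hx hy; rewrite -(opprK y); apply: LB => //; apply: LN. Qed.
Lemma Lsum (I : finType) (F : I -> vec) : (forall i, L (F i)) -> L (\sum_i F i).
Proof. by move=> h; apply: (big_ind L) => //; [exact: L0 | exact: LD]. Qed.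
Lemma LMn x k : L x -> L (x *+ k).
Proof. by move=> h; elim: k => [|k IH]; [rewrite mulr0n; exact: L0 | rewrite mulrS; apply: LD]. Qed.

Lemma minnorm_le v : L v -> v <> 0 -> minnorm L <= enorm v.
Proof.
move=> Lv v0; apply: inf_le_elt; first by move=> y [w _ <-]; apply: enorm_ge0.
by exists v.
Qed.

Lemma minnorm_gt0 : (0 < m)%N -> 0 < minnorm L.
Proof.
move=> m0; case: hL => _ _ hd [B [hB Bu]].
have [e e0 he] := hd 0 L0.
apply: lt_le_trans e0 _; apply: le_inf_lb.
  exists (enorm (row (Ordinal m0) B)); exists (row (Ordinal m0) B) => //; split => //.
  move=> /= h0.
  have : (row (Ordinal m0) B *m invmx B) = 0 by rewrite h0 mul0mx.
  rewrite -row_mul mulmxV // => /rowP /(_ (Ordinal m0)); rewrite !mxE eqxx /=.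
  by move/eqP; rewrite oner_eq0.
move=> y [w [Lw w0] <-]; rewrite -(subr0 w); apply: he => //.
Qed.

End Lat.

Section Count.
Variables (R : realType) (m : nat).
Notation vec := 'rV[R]_m.
Variable L : set vec.
Hypothesis hL : is_lattice L.

Lemma cover_iter (T : 'M[R]_m) (n : nat) (t : 'I_n -> vec) :
  mx_image T L `<=` \bigcup_(a in setT) coset L (t a) ->
  forall j, exists (I : finType) (u : I -> vec), (#|I| <= n ^ j)%N /\
    iter j (mx_image T) L `<=` \bigcup_(i in setT) coset L (u i).
Proof.
move=> hT; elim=> [|j [I [u [hI hS]]]].
  exists (unit : finType), (fun _ => 0); split; first by rewrite card_unit expn0.
  by move=> x Lx; exists tt => //; exists x => //; rewrite add0r.
exists ((I * 'I_n)%type : finType), (fun p => u p.1 *m T + t p.2); split.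
  by rewrite card_prod card_ord expnS mulnC leq_mul.
move=> z; rewrite iterS => -[w Sw <-].
have [i _ [l Ll <-]] := hS w Sw.
have [a _ [l' Ll' e]] := hT (l *m T) (ex_intro2 _ _ l Ll erefl).
exists (i, a) => //; exists l' => //=.
by rewrite mulmxDl -e addrA.
Qed.

Lemma iter_mem (T : 'M[R]_m) j y : L y ->
  iter j (mx_image T) L (iter j (fun x => x *m T) y).
Proof.
move=> Ly; elim: j => [|j IH] //=.
by exists (iter j (fun x => x *m T) y).
Qed.

Lemma enorm_le_coord (v : vec) M : 0 <= M -> (forall i, `|v 0 i| <= M) ->
  enorm v <= m%:R * M.
Proof.
move=> M0 h; rewrite enormE.
have hd : dot v v <= (m%:R * M) ^+ 2.
  apply: (@le_trans _ _ (\sum_(i < m) M * M)).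
    apply: ler_sum => i _; have := h i; rewrite ler_norml => /andP [h1 h2]; nra.
  rewrite sumr_const card_ord -mulr_natl expr2.
  have mm : m%:R <= m%:R * m%:R :> R.
    by rewrite -natrM ler_nat; case: (m) => // k; rewrite leq_pmulr.
  have m0 : 0 <= m%:R :> R by rewrite ler0n.
  nra.
apply: le_trans (ler_wsqrtr hd) _.
by rewrite sqrtr_sqr ger0_norm // mulr_ge0 // ler0n.
Qed.

Lemma enorm_mul_bound (w : vec) (B : 'M[R]_m) M : 0 <= M ->
  (forall r, `|w 0 r| <= M) ->
  enorm (w *m B) <= m%:R * (M * \sum_r \sum_i `|B r i|).
Proof.
move=> M0 h; apply: enorm_le_coord.
  by rewrite mulr_ge0 // sumr_ge0 // => r _; rewrite sumr_ge0.
move=> i; rewrite mxE.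
apply: le_trans (ler_norm_sum _ _ _) _.
rewrite mulr_sumr; apply: ler_sum => r _.
rewrite normrM; apply: ler_pM => //.
by rewrite (bigD1 i) //= lerDl sumr_ge0.
Qed.

Lemma iter_dist (T : 'M[R]_m) c j x x' :
  0 <= c -> (forall y, enorm (y *m T) = c * enorm y) ->
  enorm (iter j (fun x => x *m T) x - iter j (fun x => x *m T) x') = c ^+ j * enorm (x - x').
Proof.
move=> c0 hT; elim: j => [|j IH] /=; first by rewrite expr0 mul1r.
by rewrite -mulmxBl hT IH exprS mulrA.
Qed.

Lemma index_bound (c : R) (Q : 'M[R]_m) (n : nat) (t : 'I_n -> vec) :
  0 < c -> Q *m Q^T = 1%:M -> (0 < m)%N ->
  mx_image (c *: Q) L `<=` \bigcup_(a in setT) coset L (t a) ->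
  1 <= n%:R * c ^+ m.
Proof.
move=> c0 hQ m0 hT.
set T := c *: Q.
have normT y : enorm (y *m T) = c * enorm y.
  by rewrite /T -scalemxAr enormZ gtr0_norm // enorm_orth.
have n0 : (0 < n)%N.
  have [a _ _] := hT (0 *m T) (ex_intro2 _ _ 0 (L0 hL) erefl).
  exact: (leq_ltn_trans (leq0n a) (ltn_ord a)).
have n1 : 1 <= n%:R :> R by rewrite ler1n.
have [c1|c1] := lerP 1 c.
  have := exprn_ege1 m c1; nra.
rewrite leNgt; apply/negP => hr.
case: (hL) => _ _ _ [B [hB Bu]].
set beta := \sum_r \sum_i `|B r i|.
have beta0 : 0 <= beta by rewrite sumr_ge0 // => r _; rewrite sumr_ge0.
set l := minnorm L.
have l0 : 0 < l by apply: minnorm_gt0.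
set rho := n%:R * c ^+ m.
have rho0 : 0 <= rho by rewrite mulr_ge0 ?ler0n // exprn_ge0 // ltW.
have Kb : 0 <= 2 * m%:R * beta by rewrite !mulr_ge0 ?ler0n.
have [p hp] := geom_small rho0 hr Kb l0.
set N := (n ^ p).+1.
set j := (p * m)%N.
have [I [u [hI hS]]] := cover_iter hT j.
pose f := fun x : vec => x *m T.
pose yv := fun a : {ffun 'I_m -> 'I_N} => \row_r ((a r : nat)%:R : R) *m B.
pose z := fun a => iter j f (yv a).
have zS a : (\bigcup_(i in setT) coset L (u i)) (z a).
  apply: hS; apply: iter_mem; rewrite /yv mulmx_sum_row; apply: Lsum => // r.
  by rewrite mxE scaler_nat; apply: LMn.
have zS' a : exists i, coset L (u i) (z a) by case: (zS a) => i _ h; exists i.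
pose g := fun a => proj1_sig (cid (zS' a)).
have gP a : coset L (u (g a)) (z a) by rewrite /g; case: (cid (zS' a)).
have ginj : injective g.
  move=> a a' ea; apply/eqP; apply/negPn/negP => na.
  have := gP a; have := gP a'; rewrite ea => -[l1 Ll1 e1] [l2 Ll2 e2].
  have hL12 : L (z a - z a') by rewrite -e1 -e2 opprD addrACA subrr add0r; apply: LB.
  have ew : yv a - yv a' = (\row_r ((a r : nat)%:R - (a' r : nat)%:R : R)) *m B.
    by rewrite /yv -mulmxBl; congr (_ *m _); apply/rowP => r; rewrite !mxE.
  have wne : yv a - yv a' != 0.
    apply/negP => /eqP h0; apply/negP: na; apply/negPn/eqP/ffunP => r.
    move: h0; rewrite ew => /(congr1 (fun M => M *m invmx B)).
    rewrite mulmxK // mul0mx => /rowP /(_ r); rewrite !mxE => /eqP.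
    by rewrite subr_eq0 eqr_nat => /eqP h; apply: val_inj.
  have dist : enorm (z a - z a') = c ^+ j * enorm (yv a - yv a').
    by apply: iter_dist => //; apply: ltW.
  have zne : z a - z a' <> 0.
    move=> h0; move: dist; rewrite h0 enorm0 => /esym /eqP.
    by rewrite mulf_eq0 expf_eq0 (gt_eqF c0) andbF /= => /eqP /enorm_eq0 /eqP; rewrite (negbTE wne).
  have := minnorm_le hL12 zne; rewrite -/l dist.
  have bd : enorm (yv a - yv a') <= m%:R * (N%:R * beta).
    rewrite ew; apply: enorm_mul_bound; first by rewrite ler0n.
    move=> r; rewrite mxE ler_norml.
    have h1 := ltn_ord (a r); have h2 := ltn_ord (a' r).
    have e1' : ((a r : nat)%:R : R) <= N%:R by rewrite ler_nat ltnW.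
    have e2' : ((a' r : nat)%:R : R) <= N%:R by rewrite ler_nat ltnW.
    have e3 : 0 <= ((a r : nat)%:R : R) by rewrite ler0n.
    have e4 : 0 <= ((a' r : nat)%:R : R) by rewrite ler0n.
    apply/andP; split; lra.
  have cj0 : 0 <= c ^+ j by rewrite exprn_ge0 // ltW.
  have lt1 : c ^+ j * (m%:R * (N%:R * beta)) < l.
    rewrite /j mulnC exprM /N -addn1 natrD natrX.
    set A := (c ^+ m) ^+ p.
    have AP : A * n%:R ^+ p = rho ^+ p by rewrite /A /rho -exprMn mulrC.
    have Ale : A <= rho ^+ p.
      have cm0 : 0 <= c ^+ m by rewrite exprn_ge0 // ltW.
      have cmr : c ^+ m <= rho by rewrite /rho; nra.
      by rewrite /A; apply: lerXn2r; rewrite ?nnegrE.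
    have A0 : 0 <= A by rewrite /A !exprn_ge0 // ltW.
    have mb : 0 <= m%:R * beta by rewrite mulr_ge0 ?ler0n.
    have : A * (m%:R * ((n%:R ^+ p + 1%:R) * beta)) = (A * n%:R ^+ p + A) * (m%:R * beta) by ring.
    rewrite AP => ->.
    apply: le_lt_trans hp; rewrite -mulrA (mulrC 2) -!mulrA.
    have -> : rho ^+ p * (m%:R * (beta * 2)) = (2 * rho ^+ p) * (m%:R * beta) by ring.
    apply: ler_wpM2r => //; lra.
  move=> hle; have : c ^+ j * enorm (yv a - yv a') <= c ^+ j * (m%:R * (N%:R * beta)).
    by apply: ler_wpM2l.
  lra.
have := @leq_card _ _ g ginj; rewrite card_ffun !card_ord.
rewrite leqNgt => /negP; apply.
apply: leq_ltn_trans hI _; rewrite /j expnM.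
by rewrite ltn_exp2r // -?lt0n.
Qed.

End Count.

Lemma zmod_id (V : zmodType) (p q p' q' : V) : (p + q) - (p' + q') - (q - q') = p - p'.
Proof. by rewrite opprD addrACA addrK. Qed.

Section Pack.
Variables (R : realType) (m : nat).
Notation vec := 'rV[R]_m.

Lemma tdist_le (X Y : set vec) s t : X s -> Y t -> tdist X Y <= enorm (s - t).
Proof.
move=> Xs Yt; apply: inf_le_elt; last by exists s => //; exists t.
by move=> r [a _ [b _ <-]]; apply: enorm_ge0.
Qed.

Lemma tdist_ge0 (X Y : set vec) : 0 <= tdist X Y.
Proof. by apply: inf_ge0 => r [a _ [b _ <-]]; apply: enorm_ge0. Qed.

Lemma min_dist_le (C : set (set vec)) X Y : C X -> C Y -> X <> Y -> min_dist C <= tdist X Y.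
Proof.
move=> CX CY XY; apply: inf_le_elt; last by exists X, Y.
by move=> r [X' [Y' [_ _ _ ->]]]; apply: tdist_ge0.
Qed.

Lemma min_dist_ge0 (C : set (set vec)) : 0 <= min_dist C.
Proof. by apply: inf_ge0 => r [X' [Y' [_ _ _ ->]]]; apply: tdist_ge0. Qed.

Lemma rowZ' (a : R) (A : 'M[R]_m) i : row i (a *: A) = a *: row i A.
Proof. by apply/rowP => j; rewrite !mxE. Qed.

Definition scaleset (mu : R) (A : set vec) : set vec := [set mu *: y | y in A].

Lemma scale_lattice (mu : R) (Lam : set vec) : 0 < mu -> is_lattice Lam -> is_lattice (scaleset mu Lam).
Proof.
move=> mu0 [h0 hB hd [B [hBr Bu]]]; split.
- by exists 0 => //; rewrite scaler0.
- by move=> _ _ [a La <-] [b Lb <-]; exists (a - b); [apply: hB | rewrite scalerBr].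
- move=> _ [b Lb <-]; have [e e0 he] := hd b Lb.
  exists (mu * e); first by rewrite mulr_gt0.
  move=> _ [a La <-] ne; rewrite -scalerBr enormZ gtr0_norm // ler_pM2l //.
  by apply: he => // eab; apply: ne; rewrite eab.
- exists (mu *: B); split.
    by move=> i; rewrite rowZ'; exists (row i B).
  by rewrite unitmxZ // unitfE gt_eqF.
Qed.

Lemma zbasis_scale (mu : R) (Lam : set vec) B : zbasis Lam B -> zbasis (scaleset mu Lam) (mu *: B).
Proof.
move=> ->; rewrite /zbasis /scaleset.
have E z : \sum_(i < m) (z i)%:~R *: row i (mu *: B) = mu *: \sum_(i < m) (z i)%:~R *: row i B.
  rewrite scaler_sumr; apply: eq_bigr => i _; rewrite rowZ' !scalerA mulrC //.
apply/seteqP; split.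
  by move=> _ [_ [z _ <-] <-]; exists z => //; rewrite E.
by move=> _ [z _ <-]; exists (\sum_(i < m) (z i)%:~R *: row i B); [exists z | rewrite E].
Qed.

Lemma zbasis_unit (Lam : set vec) B : is_lattice Lam -> zbasis Lam B -> \det B != 0.
Proof.
move=> [_ _ _ [B' [hB' Bu]]] zb.
have hz i : exists z : 'I_m -> int, \sum_(r < m) (z r)%:~R *: row r B = row i B'.
  by move: (hB' i); rewrite zb => -[z _ e]; exists z.
pose Z := \matrix_(i < m, r < m) ((sval (cid (hz i))) r)%:~R : 'M[R]_m.
have EB : B' = Z *m B.
  apply/row_matrixP => i; rewrite row_mul mulmx_sum_row.
  under eq_bigr => r _ do rewrite !mxE.
  by case: (cid (hz i)) => z /= <-.
apply/negP => /eqP d0; move: Bu; rewrite unitmxE EB det_mulmx d0 mulr0.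
by rewrite unitr0.
Qed.

Variable L : set vec.
Hypothesis hL : is_lattice L.
Variables (Lam : set vec) (B : 'M[R]_m) (k : nat) (s : 'I_k -> vec).
Hypotheses (hLam : is_lattice Lam) (hzb : zbasis Lam B)
  (hs : forall i j, i != j -> ~ Lam (s i - s j))
  (hLU : L = \bigcup_(i in [set: 'I_k]) coset Lam (s i)).

Lemma Lam_sub : Lam `<=` L.
Proof.
have : L 0 by exact: L0.
rewrite {1}hLU => -[j0 _ [a0 La0 e0]] a La.
have h1 : L (s j0 + (a0 + a)).
  by rewrite hLU; exists j0 => //; exists (a0 + a) => //; apply: (LD hLam).
have h2 : L (s j0 + a0) by rewrite e0; exact: L0.
by have := LB hL h1 h2; rewrite addrA [_ + a]addrC addrK.
Qed.

Lemma s_in j : L (s j).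
Proof. by rewrite hLU; exists j => //; exists 0; [exact: L0 | rewrite addr0]. Qed.

Lemma k_gt0 : (0 < k)%N.
Proof.
have : L 0 by exact: L0.
by rewrite hLU => -[j _ _]; exact: (leq_ltn_trans (leq0n j) (ltn_ord j)).
Qed.

Definition packset (mu : R) (n : nat) (x : 'I_n -> vec) : set vec :=
  scaleset mu (\bigcup_(i in [set: 'I_n]) coset L (x i)).

Lemma pack_code (n : nat) (x : 'I_n -> vec) (delta mu : R) :
  (forall i j, i != j -> ~ L (x i - x j)) ->
  (forall i j, i != j -> delta <= tdist (coset L (x i)) (coset L (x j))) ->
  1 <= mu -> minnorm L <= mu * delta ->
  periodic_packing (minnorm L / 2) (packset mu x) ((n * k)%:R / `|\det (mu *: B)|).
Proof.
move=> hx hd mu1 hmd.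
have mu0 : 0 < mu by apply: lt_le_trans mu1.
pose sp := fun q : 'I_#|{: 'I_n * 'I_k}| => let p := enum_val q in mu *: (x p.1 + s p.2).
exists (scaleset mu Lam), (mu *: B), #|{: 'I_n * 'I_k}|, sp; split.
- by split; [apply: scale_lattice | apply: zbasis_scale].
- move=> q q' nq [a La ea].
  have ea' : a = (x (enum_val q).1 + s (enum_val q).2) - (x (enum_val q').1 + s (enum_val q').2).
    apply: (scalerI (lt0r_neq0 mu0)); by rewrite ea /sp scalerBr.
  have La' : L a by apply: Lam_sub.
  have ei : (enum_val q).1 = (enum_val q').1.
    apply/eqP; apply/negPn/negP => ne; apply: (hx _ _ ne).
    have : L (a - (s (enum_val q).2 - s (enum_val q').2)) by apply: (LB hL) => //; apply: (LB hL); apply: s_in.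
    by rewrite ea' zmod_id.
  have ej : (enum_val q).2 = (enum_val q').2.
    apply/eqP; apply/negPn/negP => ne; apply: (hs ne).
    by move: La; rewrite ea' ei opprD addrACA subrr add0r.
  move/eqP: nq; apply; apply: (can_inj enum_valK).
  by case: (enum_val q) ei ej => i j; case: (enum_val q') => i' j' /= -> ->.
- apply/seteqP; split.
    move=> _ [y [i _ [l Ll <-]] <-].
    move: Ll; rewrite {1}hLU => -[j _ [a La <-]].
    exists (enum_rank (i, j)) => //; exists (mu *: a); first by exists a.
    by rewrite /sp enum_rankK /= -scalerDr -addrA.
  move=> _ [q _ [_ [a La <-] <-]].
  exists (x (enum_val q).1 + (s (enum_val q).2 + a)).
    exists (enum_val q).1 => //; exists (s (enum_val q).2 + a) => //.
    by apply: (LD hL); [apply: s_in | apply: Lam_sub].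
  by rewrite /sp addrA scalerDr.
- move=> _ _ [y1 [i _ [l1 Ll1 <-]] <-] [y2 [i' _ [l2 Ll2 <-]] <-] ne.
  rewrite -scalerBr enormZ gtr0_norm // mulrC divfK ?pnatr_eq0 //.
  have [ii'|ii'] := eqVneq i i'.
    subst i'; rewrite opprD addrACA subrr add0r.
    have l12 : l1 - l2 <> 0 by move=> h; apply: ne; move/eqP: h; rewrite subr_eq0 => /eqP ->.
    have := minnorm_le (LB hL Ll1 Ll2) l12.
    have := enorm_ge0 (l1 - l2); nra.
  have := tdist_le (X := coset L (x i)) (Y := coset L (x i')) (ex_intro2 _ _ l1 Ll1 erefl) (ex_intro2 _ _ l2 Ll2 erefl).
  have := hd _ _ ii'.
  move=> h1 h2; apply: (le_trans hmd); rewrite ler_pM2l //; lra.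
- by rewrite card_prod !card_ord.
Qed.

Lemma detB_neq0 : \det B != 0.
Proof. exact: (zbasis_unit hLam hzb). Qed.

Lemma density_scale (n : nat) (mu : R) : 0 < mu ->
  (n * k)%:R / `|\det (mu *: B)| = (n%:R / mu ^+ m) * (k%:R / `|\det B|).
Proof.
move=> mu0; rewrite detZ normrM gtr0_norm ?exprn_gt0 // natrM.
have := detB_neq0; rewrite -normr_eq0 => hd.
field; apply/andP; split => //; rewrite expf_eq0 gt_eqF // andbF //.
Qed.

End Pack.

Section Iso.
Variables (R : realType) (m : nat).
Notation vec := 'rV[R]_m.

Lemma dot_e (x : vec) j : dot x (delta_mx 0 j) = x 0 j.
Proof.
rewrite /dot (bigD1 j) //= big1 ?addr0.
  by rewrite mxE eqxx /= mulr1.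
by move=> k kj; rewrite mxE /= (negbTE kj) mulr0.
Qed.

Lemma isometry_affine (f : vec -> vec) : Defs.isometry f ->
  exists Q : 'M[R]_m, exists b : vec, Q *m Q^T = 1%:M /\ forall x, f x = x *m Q + b.
Proof.
move=> hf; pose b := f 0; pose g := fun x => f x - b.
have gB x y : enorm (g x - g y) = enorm (x - y) by rewrite /g opprB addrA addrNK hf.
have gN x : enorm (g x) = enorm x.
  by have := gB x 0; rewrite /g /b subrr !subr0.
have gd x y : dot (g x) (g y) = dot x y.
  have := congr1 (fun r => r ^+ 2) (gB x y); rewrite /= !enorm_sqB -!enorm_sq !gN.
  move=> h; have : 2 * dot (g x) (g y) = 2 * dot x y by lra.
  by move/(mulfI (ltac:(by rewrite pnatr_eq0) : (2 : R) != 0)).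
pose Q := \matrix_(i < m, k < m) g (delta_mx 0 i) 0 k.
have QQ : Q *m Q^T = 1%:M.
  apply/matrixP => i j; rewrite !mxE.
  have -> : \sum_k Q i k * Q^T k j = dot (g (delta_mx 0 i)) (g (delta_mx 0 j)).
    by apply: eq_bigr => k _; rewrite !mxE.
  by rewrite gd dot_e mxE eqxx /= eq_sym.
exists Q, b; split => // x.
have hx : g x *m Q^T = x.
  apply/rowP => j; rewrite !mxE.
  have -> : \sum_k g x 0 k * Q^T k j = dot (g x) (g (delta_mx 0 j)).
    by apply: eq_bigr => k _; rewrite !mxE.
  by rewrite gd dot_e.
have QtQ : Q^T *m Q = 1%:M by exact: (mulmx1C QQ).
have : g x = x *m Q by rewrite -[in RHS]hx -mulmxA QtQ mulmx1.
by move=> <-; rewrite /g subrK.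
Qed.

End Iso.

Section Cosets.
Variables (R : realType) (m : nat).
Notation vec := 'rV[R]_m.
Variable L : set vec.
Hypothesis hL : is_lattice L.

Lemma coset_mem a : coset L a a.
Proof. by exists 0; [exact: L0 | rewrite addr0]. Qed.

Lemma coset_eq a b : L (a - b) -> coset L a = coset L b.
Proof.
move=> h; apply/seteqP; split => _ [l Ll <-].
  by exists (a - b + l); [apply: LD | rewrite addrA [b + _]addrC subrK].
exists (l - (a - b)); first by apply: LB.
by rewrite opprB addrCA [a + _]addrC subrK addrC.
Qed.

Lemma coset_eqL a b : coset L a = coset L b -> L (a - b).
Proof.
move=> e; have : coset L b a by rewrite -e; exact: coset_mem.
by move=> [l Ll <-]; rewrite addrC addKr.
Qed.

Lemma coset_in a y : coset L a y -> coset L y = coset L a.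
Proof. by move=> [l Ll <-]; apply: coset_eq; rewrite addrC addKr. Qed.

Definition transl (b : vec) (X : set vec) : set vec := [set z + b | z in X].

Lemma transl_coset a b : transl b (coset L a) = coset L (a + b).
Proof.
apply/seteqP; split.
  by move=> _ [_ [l Ll <-] <-]; exists l => //; rewrite addrAC.
by move=> _ [l Ll <-]; exists (a + l); [exists l | rewrite addrAC].
Qed.

Lemma transl_iso b : torus_isometry L (transl b).
Proof.
split.
- by move=> _ [x ->]; exists (x + b); rewrite transl_coset.
- move=> X Y _ _; rewrite /tdist; congr inf; apply/seteqP; split.
    move=> _ [_ [s Xs <-] [_ [t Yt <-] <-]]; exists s => //; exists t => //.
    by rewrite opprD addrACA subrr addr0.
  move=> _ [s Xs [t Yt <-]]; exists (s + b); first by exists s.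
  exists (t + b); first by exists t.
  by rewrite opprD addrACA subrr addr0.
- move=> _ [y ->]; exists (coset L (y - b)); first by exists (y - b).
  by rewrite transl_coset subrK.
Qed.

Lemma code_pts (C : set (set vec)) n : torus_code L C n ->
  exists x : 'I_n -> vec, (forall i j, i != j -> ~ L (x i - x j)) /\
    C = [set coset L (x i) | i in [set: 'I_n]].
Proof.
move=> [hpt [f [finj hf]]].
have hx i : exists x, f i = coset L x.
  by apply: hpt; rewrite -hf; exists i.
pose x := fun i => sval (cid (hx i)).
have fx i : f i = coset L (x i) by rewrite /x; case: (cid (hx i)).
exists x; split.
  move=> i j ij Lx; move/eqP: ij; apply; apply: finj.
  by rewrite !fx; apply: coset_eq.
rewrite -hf; apply/seteqP; split => _ [i _ <-]; exists i => //; by rewrite fx.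
Qed.

Lemma code_small (C : set (set vec)) n : torus_code L C n -> (n <= 1)%N -> min_dist C = 0.
Proof.
move=> [_ [f [finj hf]]] n1.
rewrite /min_dist.
have -> : [set r | exists X Y, [/\ C X, C Y, X <> Y & r = tdist X Y]] = set0.
  apply/seteqP; split => // r [X [Y [CX CY XY _]]].
  move: CX CY; rewrite -hf => -[i _ fi] [j _ fj]; apply: XY; rewrite -fi -fj; congr f.
  apply: val_inj; case: i fi => [[|i] hi] _; case: j fj => [[|j] hj] _ //=.
  - by move: (leq_trans hj n1).
  - by move: (leq_trans hi n1).
  - by move: (leq_trans hi n1).
by rewrite inf0.
Qed.

Lemma code_m0 (C : set (set vec)) n : m = 0%N -> torus_code L C n -> (n <= 1)%N.
Proof.
move=> m0 hC; have [x [hx _]] := code_pts hC.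
case: n x hx {hC} => [|[|n]] // x hx.
exfalso; apply: (hx ord0 (Ordinal (isT : (1 < n.+2)%N))) => //.
have -> : x ord0 - x (Ordinal (isT : (1 < n.+2)%N)) = 0.
  by apply/rowP => i; exfalso; have := ltn_ord i; rewrite {2}m0.
exact: L0.
Qed.

End Cosets.

Section Main.
Variables (R : realType) (m : nat).
Notation vec := 'rV[R]_m.
Variables (L : set vec) (Lam : set vec) (B : 'M[R]_m) (k : nat) (s : 'I_k -> vec) (dL : R).
Hypotheses (hL : is_lattice L) (hLam : is_lattice Lam) (hzb : zbasis Lam B)
  (hs : forall i j, i != j -> ~ Lam (s i - s j))
  (hLU : L = \bigcup_(i in [set: 'I_k]) coset Lam (s i))
  (hdL : dL = k%:R / `|\det B|)
  (hmax : forall (P : set vec) d, periodic_packing (minnorm L / 2) P d -> d <= dL).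

Lemma dL_gt0 : 0 < dL.
Proof.
rewrite hdL divr_gt0 // ?ltr0n ?normr_gt0 //; first exact: (k_gt0 hL hLU).
exact: (detB_neq0 hLam hzb).
Qed.

Lemma packing_bound n (x : 'I_n -> vec) (delta mu : R) :
  (forall i j, i != j -> ~ L (x i - x j)) ->
  (forall i j, i != j -> delta <= tdist (coset L (x i)) (coset L (x j))) ->
  1 <= mu -> minnorm L <= mu * delta -> n%:R <= mu ^+ m.
Proof.
move=> hx hd mu1 hmd.
have mu0 : 0 < mu by apply: lt_le_trans mu1.
have := hmax (pack_code hL hLam hzb hs hLU hx hd mu1 hmd).
rewrite (density_scale k hLam hzb n mu0) -hdL => h.
have d0 := dL_gt0.
have h2 : n%:R / mu ^+ m <= 1 by rewrite -(ler_pM2r d0) mul1r.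
by move: h2; rewrite ler_pdivrMr ?exprn_gt0 // mul1r.
Qed.

Lemma code_dist (C : set (set vec)) n (x : 'I_n -> vec) :
  (forall i j, i != j -> ~ L (x i - x j)) ->
  C = [set coset L (x i) | i in [set: 'I_n]] ->
  forall i j, i != j -> min_dist C <= tdist (coset L (x i)) (coset L (x j)).
Proof.
move=> hx hC i j ij; apply: min_dist_le; rewrite ?hC; [by exists i | by exists j|].
by move=> /(coset_eqL hL); apply: hx.
Qed.

Lemma code_bound (C : set (set vec)) n : torus_code L C n -> (1 < n)%N -> (0 < m)%N ->
  n%:R * min_dist C ^+ m <= minnorm L ^+ m.
Proof.
move=> hC n1 m0; have [x [hx eC]] := code_pts hL hC.
have hd := code_dist hx eC.
set delta := min_dist C.
have l0 : 0 < minnorm L by apply: (minnorm_gt0 hL).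
have d0 : 0 <= delta by apply: min_dist_ge0.
have [->|dne] := eqVneq delta 0.
  by rewrite expr0n eqn0Ngt m0 /= mulr0 exprn_ge0 // ltW.
have dpos : 0 < delta by rewrite lt_def dne.
have [ld|dl] := lerP (minnorm L) delta.
  have hm1 : minnorm L <= 1 * delta by rewrite mul1r.
  have := packing_bound hx hd (lexx 1) hm1.
  by rewrite expr1n lern1 leqNgt n1.
have mu1 : 1 <= minnorm L / delta by rewrite ler_pdivlMr // mul1r ltW.
have hm2 : minnorm L <= minnorm L / delta * delta by rewrite divfK // gt_eqF.
have := packing_bound hx hd mu1 hm2.
by rewrite expr_div_n ler_pdivlMr // exprn_gt0.
Qed.

Lemma latcode_facts (C : set (set vec)) n (c : R) (Q : 'M[R]_m) :
  0 < c -> Q *m Q^T = 1%:M -> L `<=` mx_image (c *: Q) L ->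
  C = [set coset L t | t in mx_image (c *: Q) L] -> torus_code L C n -> (1 < n)%N -> (0 < m)%N ->
  c * minnorm L <= min_dist C /\ 1 <= n%:R * c ^+ m.
Proof.
move=> c0 hQ hLT eC hC n1 m0.
have [x [hx eC']] := code_pts hL hC.
set T := c *: Q.
have normT y : enorm (y *m T) = c * enorm y.
  by rewrite /T -scalemxAr enormZ gtr0_norm // enorm_orth.
split; last first.
  apply: (index_bound hL (Q := Q) (t := x) c0 hQ m0) => t Tt.
  have : C (coset L t) by rewrite eC; exists t.
  rewrite eC' => -[a _ ea]; exists a => //.
  by rewrite ea; exact: coset_mem.
have i0 : 'I_n := Ordinal (ltnW n1).
have i1 : 'I_n := Ordinal n1.
apply: le_inf_lb.
  exists (tdist (coset L (x (Ordinal (ltnW n1)))) (coset L (x (Ordinal n1)))).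
  exists (coset L (x (Ordinal (ltnW n1)))), (coset L (x (Ordinal n1))); split => //.
  - by rewrite eC'; eexists.
  - by rewrite eC'; eexists.
  - by move=> /(coset_eqL hL); apply: hx.
move=> _ [X [Y [CX CY XY ->]]].
move: (CX) (CY); rewrite {1 2}eC => -[t1 [y1 Ly1 e1] eX] [t2 [y2 Ly2 e2] eY].
apply: le_inf_lb.
  by exists (enorm (t1 - t2)); exists t1; [rewrite -eX; exact: coset_mem | exists t2 => //; rewrite -eY; exact: coset_mem].
move=> _ [u Xu [v Yv <-]].
move: Xu Yv; rewrite -eX -eY => -[l1 Ll1 <-] [l2 Ll2 <-].
have [z1 Lz1 ez1] := hLT l1 Ll1.
have [z2 Lz2 ez2] := hLT l2 Ll2.
set y := (y1 + z1) - (y2 + z2).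
have ey : t1 + l1 - (t2 + l2) = y *m T by rewrite /y mulmxBl !mulmxDl e1 e2 ez1 ez2.
have Ly : L y by apply: (LB hL); apply: (LD hL).
have yne : y <> 0.
  move=> y0; apply: XY; rewrite -eX -eY; apply: (coset_eq hL).
  have : t1 + l1 - (t2 + l2) = 0 by rewrite ey y0 mul0mx.
  move/eqP; rewrite subr_eq0 => /eqP e.
  have -> : t1 - t2 = l2 - l1.
    have t1e : t1 = t2 + l2 - l1 by rewrite -e addrK.
    by rewrite t1e addrAC [t2 + l2]addrC addrK.
  by apply: (LB hL).
by rewrite ey normT ler_pM2l //; apply: minnorm_le.
Qed.

End Main.

Lemma zmod_id2 (V : zmodType) (a l c : V) : (a + l - c) - (a - c) = l.
Proof. by rewrite opprB addrA subrK addrC addKr. Qed.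
Lemma zmod_id4 (V : zmodType) (a c d : V) : (a - c) - (d - c) = a - d.
Proof. by rewrite opprB addrA subrK. Qed.

Lemma latcode_pos (R : realType) (m : nat) (L : set 'rV[R]_m) (C : set (set 'rV[R]_m)) n :
  is_lattice L -> lattice_code L C -> torus_code L C n -> (0 < n)%N.
Proof.
move=> hL [T [_ hLT eC]] [_ [f [_ hf]]].
have : C (coset L 0) by rewrite eC; exists 0 => //; exists 0; [exact: L0 | rewrite mul0mx].
rewrite -hf => -[i _ _]; exact: (leq_ltn_trans (leq0n i) (ltn_ord i)).
Qed.

Unset Implicit Arguments.

Theorem lemma4p6 (R : realType) (m : nat) (L : set 'rV[R]_m) :
  is_lattice L -> unique_densest L ->
  (forall C : set (set 'rV[R]_m), lattice_code L C ->
     forall n : nat, torus_code L C n -> optimal_code L C n) /\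
  (forall n : nat, (exists C, lattice_code L C /\ torus_code L C n) ->
     forall C, optimal_code L C n ->
       exists C' phi, [/\ lattice_code L C', torus_code L C' n,
                          torus_isometry L phi & C = phi @` C']).
Proof.
move=> hL [dL [hPL hmax huniq]].
case: hPL => Lam [B [k [s [[hLam hzb] hs hLU _ hdL]]]].
have hm1 : forall C n, torus_code L C n -> (1 < n)%N -> (0 < m)%N.
  move=> C n hC n1; rewrite lt0n; apply/negP => /eqP m0.
  by have := code_m0 hL m0 hC; rewrite leqNgt n1.
have l0 : (0 < m)%N -> 0 < minnorm L by move=> m0; apply: (minnorm_gt0 hL).
split.
  move=> C hlc n hC; split => // C' hC'.
  case: (leqP n 1) => [n1|n1].
    by rewrite (code_small hC' n1) (code_small hC n1).
  have m0 := hm1 _ _ hC n1.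
  case: hlc => T [[c [Q [c0 hQ eT]]] hLT eC]; subst T.
  have [hdC hn] := latcode_facts hL c0 hQ hLT eC hC n1 m0.
  have hb := code_bound hL hLam hzb hs hLU hdL hmax hC' n1 m0.
  apply: le_trans hdC; rewrite leNgt; apply/negP => h.
  have cl0 : 0 <= c * minnorm L by rewrite mulr_ge0 // ltW ?l0.
  have h1 : (c * minnorm L) ^+ m < min_dist C' ^+ m.
    by rewrite ltrXn2r // -lt0n.
  have n0 : 0 < n%:R :> R by rewrite ltr0n (ltn_trans _ n1).
  have h2 : n%:R * (c * minnorm L) ^+ m < n%:R * min_dist C' ^+ m by rewrite ltr_pM2l.
  have h3 : minnorm L ^+ m <= n%:R * (c * minnorm L) ^+ m.
    rewrite exprMn mulrA -[X in X <= _]mul1r ler_pM2r //; last by rewrite exprn_gt0 // l0.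
  by have := lt_le_trans (le_lt_trans h3 h2) hb; rewrite ltxx.
move=> n [C0 [hlc0 hC0]] C [hC hopt].
have npos := latcode_pos hL hlc0 hC0.
have [x [hx eC]] := code_pts hL hC.
case: (leqP n 1) => [n1|n1].
  have [y [_ eC0]] := code_pts hL hC0.
  case: (hlc0) => T [_ hLT eC0'].
  have i0 : 'I_n := Ordinal npos.
  have allL t : mx_image T L t -> L t.
    move=> Tt.
    have e1 : C0 (coset L t) by rewrite eC0'; exists t.
    have e2 : C0 (coset L 0) by rewrite eC0'; exists 0 => //; exists 0; [exact: L0 | rewrite mul0mx].
    move: e1 e2; rewrite eC0 => -[i _ ei] [j _ ej].
    have ij : i = j.
      apply: ord_inj; have hi := leq_trans (ltn_ord i) n1; have hj := leq_trans (ltn_ord j) n1.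
      by move: hi hj; rewrite !ltnS !leqn0 => /eqP -> /eqP ->.
    by move: ei ej; rewrite ij => -> /(coset_eqL hL); rewrite subr0.
  exists C0, (transl (x (Ordinal npos))); split => //; first exact: transl_iso.
  rewrite eC; apply/seteqP; split.
    move=> _ [i _ <-]; exists (coset L 0).
      by rewrite eC0'; exists 0 => //; exists 0; [exact: L0 | rewrite mul0mx].
    rewrite transl_coset // add0r; congr (coset L (x _)); apply: ord_inj => /=.
    by have := leq_trans (ltn_ord i) n1; rewrite ltnS leqn0 => /eqP ->.
  move=> Z [X]; rewrite eC0' => -[t Tt <-] <-.
  exists (Ordinal npos) => //; rewrite transl_coset //; apply: (coset_eq hL).
  by rewrite opprD addrCA subrr addr0; apply: (LN hL); apply: allL.
have m0 := hm1 _ _ hC n1.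
have lpos := l0 m0.
case: (hlc0) => T0 [[c0 [Q0 [c00 hQ0 eT0]]] hLT0 eC0]; subst T0.
have [hd0 hn0] := latcode_facts hL c00 hQ0 hLT0 eC0 hC0 n1 m0.
have hopt0 := hopt C0 hC0.
have hb := code_bound hL hLam hzb hs hLU hdL hmax hC n1 m0.
set delta := min_dist C.
set l := minnorm L.
have cl0 : 0 < c0 * l by rewrite mulr_gt0.
have dpos : 0 < delta by apply: lt_le_trans cl0 (le_trans hd0 hopt0).
have npos' : 0 < n%:R :> R by rewrite ltr0n.
have heq : n%:R * delta ^+ m = l ^+ m.
  apply/eqP; rewrite eq_le hb /=.
  have h1 : (c0 * l) ^+ m <= delta ^+ m.
    have cd : c0 * l <= delta := le_trans hd0 hopt0.
    by apply: lerXn2r; rewrite // nnegrE ltW.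
  apply: (@le_trans _ _ (n%:R * (c0 * l) ^+ m)); last by rewrite ler_pM2l.
  by rewrite exprMn mulrA -[X in X <= _]mul1r ler_pM2r // exprn_gt0.
have dl : delta <= l.
  rewrite leNgt; apply/negP => h.
  have h1 : l ^+ m < delta ^+ m by rewrite ltrXn2r // -?lt0n // ltW.
  have h2 : delta ^+ m <= n%:R * delta ^+ m.
    by rewrite -[X in X <= _]mul1r ler_pM2r ?exprn_gt0 // ler1n ltnW.
  by have := lt_le_trans h1 h2; rewrite heq ltxx.
set mu := l / delta.
have mu1 : 1 <= mu by rewrite /mu ler_pdivlMr // mul1r.
have mupos : 0 < mu by apply: lt_le_trans mu1.
have hmd : l <= mu * delta by rewrite /mu divfK // gt_eqF.
have hd := code_dist hL hx eC.
have pk := pack_code hL hLam hzb hs hLU hx hd mu1 hmd.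
rewrite (density_scale k hLam hzb n mupos) -hdL in pk.
have mun : mu ^+ m = n%:R.
  rewrite /mu expr_div_n -heq mulfK // expf_neq0 // gt_eqF //.
rewrite mun mulfV ?gt_eqF // mul1r in pk.
have [f hf ePf] := huniq _ pk.
have [Q [b [hQ hfQ]]] := isometry_affine hf.
set nu := mu^-1.
have nupos : 0 < nu by rewrite invr_gt0.
set T := nu *: Q.
set b' := nu *: b.
have fT y : nu *: f y = y *m T + b' by rewrite hfQ scalerDr scalemxAr.
have K1 y : L y -> exists i, exists2 l', L l' & y *m T + b' = x i + l'.
  move=> Ly; have : packset L mu x (f y) by rewrite ePf; exists y.
  move=> [z [i _ [l' Ll' ez]] efz]; exists i; exists l' => //.
  by rewrite -fT -efz scalerA mulVf ?gt_eqF // scale1r ez.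
have K2 i l' : L l' -> exists2 y, L y & x i + l' = y *m T + b'.
  move=> Ll'; have : packset L mu x (mu *: (x i + l')).
    by exists (x i + l') => //; exists i => //; exists l'.
  rewrite ePf => -[y Ly efy]; exists y => //.
  by rewrite -fT efy scalerA mulVf ?gt_eqF // scale1r.
have i0 : 'I_n := Ordinal (ltnW n1).
have hLT : L `<=` mx_image T L.
  move=> l' Ll'.
  have [y1 Ly1 e1] := K2 (Ordinal (ltnW n1)) l' Ll'.
  have [y0 Ly0 e0] := K2 (Ordinal (ltnW n1)) 0 (L0 hL).
  exists (y1 - y0); first exact: LB.
  rewrite mulmxBl.
  have -> : y1 *m T = x (Ordinal (ltnW n1)) + l' - b' by rewrite e1 addrK.
  have -> : y0 *m T = x (Ordinal (ltnW n1)) - b' by rewrite -[x _]addr0 e0 addrK.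
  by rewrite zmod_id2.
set C' := [set coset L t | t in mx_image T L].
exists C', (transl b'); split.
- exists T; split => //; exists nu, Q; split => //.
- split; first by move=> _ [t _ <-]; exists t.
  exists (fun i => coset L (x i - b')); split.
    move=> i j /(coset_eqL hL) h; apply/eqP; apply/negPn/negP => ij; apply: (hx _ _ ij).
    by move: h; rewrite zmod_id4.
  apply/seteqP; split.
    move=> _ [i _ <-]; have [y Ly ey] := K2 i 0 (L0 hL).
    exists (y *m T); first by exists y.
    by rewrite -[x i]addr0 ey addrK.
  move=> _ [_ [y Ly <-] <-]; have [i [l' Ll' e]] := K1 y Ly.
  exists i => //; apply: (coset_eq hL).
  have -> : x i - b' - y *m T = - l'.
    by rewrite -addrA -opprD [b' + _]addrC e opprD addrA subrr add0r.
  exact: (LN hL).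
- exact: transl_iso.
- rewrite eC; apply/seteqP; split.
    move=> _ [i _ <-]; have [y Ly ey] := K2 i 0 (L0 hL).
    exists (coset L (y *m T)); first by exists (y *m T) => //; exists y.
    by rewrite transl_coset // -ey addr0.
  move=> _ [_ [_ [y Ly <-] <-] <-]; have [i [l' Ll' e]] := K1 y Ly.
  exists i => //; rewrite transl_coset // e; apply: (coset_eq hL).
  by rewrite opprD addrA subrr add0r; apply: (LN hL).
Qed.
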